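(* Let $1\le r<\infty$, $d\in\mathbb{N}$, $\varepsilon>0$. Let $a=\lceil(8/\varepsilon+3)^r\rceil$ and $M=\{a^{j-1}: j\in\mathbb{N}\}$. Let $\bar m,\bar n\in[M]^d$ with $m_1<n_1<\dots<m_d<n_d$ and let $k>n_d$. Let $F\colon S_{\ell_\infty^k}\to S_{\ell_r^k}$ be a support preserving and step preserving map. Then \[\|F(z(\bar m))-F(z(\bar n))\|_r>1-\varepsilon.\]
   Context: $S_{\ell_p^k}$ is the unit sphere of $(\mathbb{R}^k,\|\cdot\|_p)$. $[M]^d$ is the set of increasing $d$-tuples from $M$. For $\bar m\in[\mathbb{N}]^d$ with $m_0=0$, $z(\bar m)=\sum_{s=1}^d(1-\frac{s-1}{d})1_{(m_{s-1},m_s]}$, viewed in $S_{\ell_\infty^k}$ for $k\ge m_d$, where $1_{(a,b]}$ is the indicator vector of $\{i:a<i\le b\}$. $\mathrm{supp}(x)=\{i:x_i\ne0\}$; $F$ is support preserving if $\mathrm{supp}(F(x))=\mathrm{supp}(x)$ for all $x$; $F=(F_i)$ is step preserving if $x_i=x_j$ implies $F_i(x)=F_j(x)$. *)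

(* Defs.v *)
From HB Require Import structures.
From mathcomp Require Import all_boot all_order all_algebra.
From mathcomp Require Import all_classical all_reals.
From mathcomp Require Import exp.
Set Implicit Arguments. Unset Strict Implicit. Unset Printing Implicit Defensive.
Import Order.TTheory GRing.Theory Num.Theory.
Local Open Scope ring_scope.

(* Vectors of R^k are functions 'I_k -> R; coordinate i : 'I_k stands for
   the paper's coordinate i+1 (paper indexes coordinates 1..k). *)

Definition supnorm {R : realType} {k : nat} (x : 'I_k -> R) : R :=
  \big[Num.max/0]_(i < k) `|x i|.

Definition lpnorm {R : realType} (p : R) {k : nat} (x : 'I_k -> R) : R :=
  (\sum_(i < k) `|x i| `^ p) `^ p^-1.

Definition supp {R : realType} {k : nat} (x : 'I_k -> R) : {set 'I_k} :=
  [set i | x i != 0].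

(* The d-tuple m_1 < ... < m_d is given as m : nat -> nat, read at s = 1..d;
   the convention m_0 = 0 is built in via [mprev]. *)
Definition mprev (m : nat -> nat) (s : nat) : nat :=
  if s == 1%N then 0%N else m s.-1.

Definition zvec {R : realType} (d : nat) (m : nat -> nat) (k : nat) : 'I_k -> R :=
  fun i => \sum_(1 <= s < d.+1)
             (1 - (s.-1)%:R / d%:R) * ((mprev m s < i.+1 <= m s)%N)%:R.

(* Main.v *)
Require Import Defs.
From HB Require Import structures.
From mathcomp Require Import all_boot all_order all_algebra.
From mathcomp Require Import all_classical all_reals.
From mathcomp Require Import interval_inference exp convex hoelder.
From mathcomp Require Import zify ring lra.
Import Order.TTheory GRing.Theory Num.Theory.
Local Open Scope ring_scope.

Definition qq (p : nat -> nat) (j : nat) : nat := if j is 0 then 0%N else p j.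

Lemma mprevS p s : mprev p s.+1 = qq p s.
Proof. by case: s. Qed.

Lemma sum_pick (R : realType) (a b c : nat) (G : nat -> R) :
  (a <= c < b)%N -> \sum_(a <= s < b) G s * (s == c)%:R = G c.
Proof.
move=> hc.
rewrite (bigD1_seq c) ?mem_index_iota ?iota_uniq //= eqxx mulr1 big1 ?addr0 //.
by move=> i /negbTE ->; rewrite mulr0.
Qed.

Lemma partition_sum (R : realType) (q : nat -> nat) (J : nat) (f : nat -> R) :
  (forall j, (j < J)%N -> (q j <= q j.+1)%N) ->
  \sum_(q 0 <= i < q J) f i = \sum_(j < J) \sum_(q j <= i < q j.+1) f i.
Proof.
elim: J => [|J IH] h; first by rewrite big_geq // big_ord0.
have h0 : forall j, (j <= J)%N -> (q 0 <= q j)%N.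
  elim=> [//|j IHj] hj; apply: leq_trans (IHj (ltnW hj)) (h _ _); lia.
rewrite big_ord_recr /= -IH; last by move=> j hj; apply: h; lia.
by rewrite -big_cat_nat // ?h0 // h.
Qed.

Definition ext {R : realType} {k : nat} (f : 'I_k -> R) (i : nat) : R :=
  if insub i is Some j then f j else 0.

Lemma ext_val (R : realType) (k : nat) (f : 'I_k -> R) (i : 'I_k) : ext f i = f i.
Proof. by rewrite /ext valK. Qed.

Section Chain.
Variables (R : realType) (d k : nat) (p : nat -> nat).
Hypothesis mono : forall s t, (1 <= s)%N -> (s <= t)%N -> (t <= d)%N -> (p s <= p t)%N.

Lemma ind_block s i s' : (s < d)%N -> (qq p s <= i < p s.+1)%N -> (1 <= s' <= d)%N ->
  (mprev p s' < i.+1 <= p s')%N = (s' == s.+1).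
Proof.
move=> sd /andP[h1 h2] /andP[h3 h4].
case: (ltngtP s' s.+1) => hs.
- have hs1 : (1 <= s)%N by lia.
  have hm : (p s' <= p s)%N by apply: mono; lia.
  rewrite /qq in h1.
  case: s hs1 h1 hm {hs sd h2} => // s _ h1 hm.
  apply/negbTE; apply/negP => /andP[_ h5]; lia.
- rewrite /mprev; have -> : (s' == 1%N) = false by apply/negbTE; lia.
  have hm : (p s.+1 <= p s'.-1)%N by apply: mono; lia.
  apply/negbTE; apply/negP => /andP[h5 _]; lia.
- by rewrite hs mprevS ltnS h1 h2.
Qed.

Lemma zblock (i : 'I_k) s : (s < d)%N -> (qq p s <= i < p s.+1)%N ->
  @zvec R d p k i = 1 - s%:R / d%:R.
Proof.
move=> sd hi; rewrite /zvec.
rewrite (eq_big_nat _ _ (F2 := fun s' => (1 - (s'.-1)%:R / d%:R) * (s' == s.+1)%:R)).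
  by rewrite sum_pick //; lia.
by move=> s' hs'; rewrite (@ind_block s i s') //; lia.
Qed.

Lemma zzero (i : 'I_k) : (p d <= i)%N -> @zvec R d p k i = 0.
Proof.
move=> hi; rewrite /zvec big_nat big1 // => s' hs'.
have -> : (mprev p s' < i.+1 <= p s')%N = false.
  move: hs' => /andP[hs1 hs2].
  have hm2 : (p s' <= p d)%N by apply: mono; lia.
  apply/negbTE; apply/negP => /andP[_ h5]; lia.
by rewrite mulr0.
Qed.

Lemma block_exists i : (1 <= d)%N -> (i < p d)%N -> exists s, (s < d)%N /\ (qq p s <= i < p s.+1)%N.
Proof.
move=> d1.
suff: forall t, (1 <= t <= d)%N -> (i < p t)%N -> exists s, (s < t)%N /\ (qq p s <= i < p s.+1)%N.
  move=> /(_ d); rewrite d1 leqnn => /(_ isT) hh /hh [s [h1 h2]]; exists s; split => //.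
elim=> [//|t IH] /andP[_ ht] hi.
case: t IH ht hi => [|t] IH ht hi; first by exists 0%N.
case: (ltnP i (p t.+1)) => hit.
  have [s [h1 h2]] := IH ltac:(lia) hit; exists s; split => //; lia.
by exists t.+1; split => //; rewrite /= hit.
Qed.

Lemma partition_p (f : nat -> R) : (0 < p 1)%N -> (1 <= d)%N ->
  \sum_(0 <= i < p d) f i = \sum_(s < d) \sum_(qq p s <= i < p s.+1) f i.
Proof.
move=> p1 d1.
have -> : p d = qq p d by case: d d1.
rewrite -[X in \sum_(X <= i < _) _]/(qq p 0) partition_sum //.
move=> j hj; case: j hj => [//|j] hj /=; apply: mono; lia.
Qed.

Lemma zsup : (1 <= d)%N -> (0 < p 1)%N -> (0 < k)%N -> supnorm (@zvec R d p k) = 1.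
Proof.
move=> d1 p1 k0.
have hle : forall i : 'I_k, `|@zvec R d p k i| <= 1.
  move=> i; case: (ltnP i (p d)) => hi.
    have [s [h1 h2]] := block_exists (nat_of_ord i) d1 hi.
    rewrite (@zblock i s h1 h2) ger0_norm.
      by rewrite lerBlDr lerDl divr_ge0.
    rewrite subr_ge0 ler_pdivrMr ?ltr0n // mul1r ler_nat; lia.
  by rewrite zzero // normr0.
apply/eqP; rewrite eq_le; apply/andP; split.
  rewrite /supnorm; elim/big_rec: _ => [|i x _ hx]; first exact: ler01.
  by rewrite ge_max hle hx.
rewrite /supnorm (bigD1 (Ordinal k0)) //=.
rewrite (@zblock (Ordinal k0) 0) //= ?p1 //.
by rewrite mul0r subr0 normr1 le_max lexx.
Qed.

Lemma Ublock (F : ('I_k -> R) -> ('I_k -> R)) s i :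
  (forall x : 'I_k -> R, supnorm x = 1 -> forall i j : 'I_k, x i = x j -> F x i = F x j) ->
  supnorm (@zvec R d p k) = 1 -> (s < d)%N -> (p d < k)%N ->
  (qq p s <= i < p s.+1)%N ->
  ext (F (@zvec R d p k)) i = ext (F (@zvec R d p k)) (qq p s).
Proof.
move=> Hstep Hz sd hk hi.
have hpd : (p s.+1 <= p d)%N by apply: mono; lia.
have hik : (i < k)%N by lia.
have hjk : (qq p s < k)%N by lia.
have -> : ext (F (@zvec R d p k)) i = F (@zvec R d p k) (Ordinal hik) by rewrite -ext_val.
have -> : ext (F (@zvec R d p k)) (qq p s) = F (@zvec R d p k) (Ordinal hjk) by rewrite -ext_val.
apply: Hstep => //.
rewrite (@zblock (Ordinal hik) s) // (@zblock (Ordinal hjk) s) //=.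
rewrite leqnn /=; lia.
Qed.

Lemma Uzero (F : ('I_k -> R) -> ('I_k -> R)) i :
  (forall x : 'I_k -> R, supnorm x = 1 -> supp (F x) = supp x) ->
  supnorm (@zvec R d p k) = 1 -> (p d <= i)%N ->
  ext (F (@zvec R d p k)) i = 0.
Proof.
move=> Hsupp Hz hi.
case: (ltnP i k) => hik; last by rewrite /ext insubF // ltnNge hik.
have -> : ext (F (@zvec R d p k)) i = F (@zvec R d p k) (Ordinal hik) by rewrite -ext_val.
have := congr1 (fun S : {set 'I_k} => Ordinal hik \in S) (Hsupp _ Hz).
rewrite /supp !inE (@zzero (Ordinal hik)) // eqxx /=.
by move/negbT; rewrite negbK => /eqP.
Qed.

End Chain.

Lemma mono_of_step (d : nat) (p : nat -> nat) :
  (forall t, (1 <= t)%N -> (t < d)%N -> (p t <= p t.+1)%N) ->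
  forall s t, (1 <= s)%N -> (s <= t)%N -> (t <= d)%N -> (p s <= p t)%N.
Proof.
move=> h s; elim=> [|t IH] h1 h2 h3; first by lia.
case: (leqP s t) => hst; last by have -> : s = t.+1 by lia.
apply: leq_trans (IH h1 hst (ltnW h3)) (h _ _ _); lia.
Qed.


Lemma const_sum (R : realType) (a a' b : nat) (f : nat -> R) (c : R) :
  (forall i, (a <= i < b)%N -> f i = c) -> (a <= a')%N ->
  \sum_(a' <= i < b) f i = (b - a')%:R * c.
Proof.
move=> hf ha.
rewrite (eq_big_nat _ _ (F2 := fun=> c)); first by rewrite sumr_const_nat mulr_natl.
move=> i hi; apply: hf; lia.
Qed.

Lemma sub_lo (R : realType) (a a' b : nat) (f : nat -> R) :
  (forall i, 0 <= f i) -> (a <= a')%N ->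
  \sum_(a' <= i < b) f i <= \sum_(a <= i < b) f i.
Proof.
move=> hf ha; case: (leqP a' b) => hb.
  rewrite (big_cat_nat (m:=a) (n:=a') (p:=b)) //= lerDr; exact: sumr_ge0.
by rewrite big_geq ?sumr_ge0 //; lia.
Qed.

Lemma sub_hi (R : realType) (a b' b : nat) (f : nat -> R) :
  (forall i, 0 <= f i) -> (b' <= b)%N ->
  \sum_(a <= i < b') f i <= \sum_(a <= i < b) f i.
Proof.
move=> hf hb; case: (leqP a b') => ha.
  rewrite (big_cat_nat (m:=a) (n:=b') (p:=b)) //= lerDl; exact: sumr_ge0.
by rewrite big_geq ?sumr_ge0 //; lia.
Qed.

Lemma sum_ext (R : realType) (k : nat) (f : 'I_k -> R) (G : R -> R) :
  \sum_(i < k) G (f i) = \sum_(0 <= i < k) G (ext f i).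
Proof. by rewrite big_mkord; apply: eq_bigr => i _; rewrite ext_val. Qed.


Lemma conv_pt (R : realType) (r lam x y : R) : 1 <= r -> 0 <= lam <= 1 -> 0 <= x -> 0 <= y ->
 (lam * x + (1-lam) * y) `^ r <= lam * x `^ r + (1-lam) * y `^ r.
Proof.
move=> r1 /andP[l0 l1] x0 y0.
have := @convex_powR R r r1 (Itv01 l0 l1) x y.
rewrite !inE /= !in_itv /= !andbT => /(_ x0 y0).
by rewrite !convRE /=.
Qed.

Lemma powR_invx (R : realType) (r l : R) : 0 < l -> l^-1 `^ r = (l `^ r)^-1.
Proof.
move=> l0.
have h : l `^ r * l^-1 `^ r = 1 by rewrite -powRM ?invr_ge0 ?ltW// mulfV ?gt_eqF// powR1.
by rewrite -[LHS]mul1r -(mulVf (x:=l `^ r)) ?gt_eqF ?powR_gt0// -mulrA h mulr1.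
Qed.

Lemma key_pt (R : realType) (r lam X Y : R) : 1 <= r -> 0 < lam < 1 ->
 `|X| `^ r <= lam / lam `^ r * `|X - Y| `^ r + (1-lam) / (1-lam) `^ r * `|Y| `^ r.
Proof.
move=> r1 /andP[l0 l1].
have r0 : 0 <= r by apply: le_trans r1.
have m0 : 0 < 1 - lam by rewrite subr_gt0.
have e : `|X - Y| + `|Y| = lam * (`|X - Y| / lam) + (1 - lam) * (`|Y| / (1 - lam)).
  by rewrite !(mulrC _ (_ / _)) -!mulrA !mulVf ?gt_eqF // !mulr1.
apply: (le_trans (ge0_ler_powR r0 _ _ (_ : `|X| <= `|X - Y| + `|Y|))).
- by rewrite nnegrE.
- by rewrite nnegrE addr_ge0.
- by rewrite -{1}(subrK Y X) ler_normD.
rewrite e; apply: le_trans; first apply: conv_pt => //.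
- by rewrite ltW // ltW.
- by rewrite divr_ge0 // ltW.
- by rewrite divr_ge0 // ltW.
have hl : 0 <= lam^-1 by rewrite invr_ge0 ltW.
have hm : 0 <= (1 - lam)^-1 by rewrite invr_ge0 ltW.
rewrite (powRM _ _ hm) ?(powRM _ _ hl) // powR_invx // powR_invx //.
by rewrite !mulrA !(mulrAC _ (`| _ | `^ r)).
Qed.

Lemma ext_sub (R : realType) (k : nat) (u v : 'I_k -> R) i :
  ext (fun j => u j - v j) i = ext u i - ext v i.
Proof. by rewrite /ext; case: insub => //; rewrite subr0. Qed.

Lemma pow_gap (R : realType) (a : R) (x y : nat) : 1 < a ->
  (exists j : nat, x%:R = a ^+ j) -> (exists j : nat, y%:R = a ^+ j) ->
  (x < y)%N -> a * x%:R <= y%:R.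
Proof.
move=> a1 [j ej] [l el] xy.
case: (leqP l j) => h.
  have : (y%:R : R) <= x%:R by rewrite ej el ler_eXn2l.
  by rewrite ler_nat leqNgt xy.
by rewrite ej el -exprS ler_eXn2l.
Qed.

Lemma sum_one (R : realType) (r S : R) : 1 <= r -> 0 <= S -> S `^ r^-1 = 1 -> S = 1.
Proof.
move=> r1 S0 h.
have r0 : r != 0 by rewrite gt_eqF // (lt_le_trans ltr01 r1).
have e : S = S `^ (r^-1 * r) by rewrite mulVf // powRr1.
by rewrite e powRrM h powR1.
Qed.

Theorem lemma4p1 (R : realType) (r : R) (d : nat) (eps : R)
  (m n : nat -> nat) (k : nat)
  (F : ('I_k -> R) -> ('I_k -> R)) :
  1 <= r -> (1 <= d)%N -> 0 < eps ->
  (forall s, (1 <= s <= d)%N ->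
     exists j : nat, (m s)%:R = ((Num.ceil ((8 / eps + 3) `^ r))%:~R : R) ^+ j) ->
  (forall s, (1 <= s <= d)%N ->
     exists j : nat, (n s)%:R = ((Num.ceil ((8 / eps + 3) `^ r))%:~R : R) ^+ j) ->
  (forall s, (1 <= s <= d)%N -> (m s < n s)%N) ->
  (forall s, (1 <= s < d)%N -> (n s < m s.+1)%N) ->
  (n d < k)%N ->
  (forall x : 'I_k -> R, supnorm x = 1 -> lpnorm r (F x) = 1) ->
  (forall x : 'I_k -> R, supnorm x = 1 -> supp (F x) = supp x) ->
  (forall x : 'I_k -> R, supnorm x = 1 -> forall i j : 'I_k, x i = x j -> F x i = F x j) ->
  1 - eps < lpnorm r (fun i => F (@zvec R d m k) i - F (@zvec R d n k) i).
Proof.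
move=> r1 d1 eps0 Hm Hn Hmn Hnm Hk Hnorm Hsupp Hstep.
set b := 8 / eps + 3 in Hm Hn.
set a := ((Num.ceil (b `^ r))%:~R : R) in Hm Hn.
have r0 : 0 < r by apply: lt_le_trans r1.
have hb3 : 3 < b by rewrite /b ltrDr divr_gt0.
have hB : b <= b `^ r by apply: le1r_powR => //; apply: ltW; apply: lt_trans hb3; rewrite ltr1n.
have ha : b `^ r <= a by exact: ceil_ge.
have a1 : 1 < a by apply: lt_le_trans ha; apply: lt_le_trans hB; apply: lt_trans hb3; rewrite ltr1n.
have monom : forall s t, (1 <= s)%N -> (s <= t)%N -> (t <= d)%N -> (m s <= m t)%N.
  apply: mono_of_step => t h1 h2.
  have := Hmn t ltac:(lia); have := Hnm t ltac:(lia); lia.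
have monon : forall s t, (1 <= s)%N -> (s <= t)%N -> (t <= d)%N -> (n s <= n t)%N.
  apply: mono_of_step => t h1 h2.
  have := Hmn t.+1 ltac:(lia); have := Hnm t ltac:(lia); lia.
have m1 : (0 < m 1)%N.
  have [j ej] := Hm 1%N ltac:(lia).
  have : (0 : R) < (m 1)%:R by rewrite ej exprn_gt0 // (lt_trans ltr01 a1).
  by rewrite ltr0n.
have n1 : (0 < n 1)%N by have := Hmn 1%N ltac:(lia); lia.
have k0 : (0 < k)%N by lia.
have mdk : (m d < k)%N by have := Hmn d ltac:(lia); lia.
have Hzm := @zsup R d k m monom d1 m1 k0.
have Hzn := @zsup R d k n monon d1 n1 k0.
pose u := F (@zvec R d m k). pose v := F (@zvec R d n k).
pose gU i := `|ext u i| `^ r. pose gV i := `|ext v i| `^ r.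
pose gD i := `|ext (fun j => u j - v j) i| `^ r.
have gU0 : forall i, 0 <= gU i by move=> i; exact: powR_ge0.
have gV0 : forall i, 0 <= gV i by move=> i; exact: powR_ge0.
have gD0 : forall i, 0 <= gD i by move=> i; exact: powR_ge0.
have totU0 : \sum_(0 <= i < k) gU i = 1.
  have e := @sum_ext R k u (fun x => `|x| `^ r); cbv beta in e.
  rewrite /gU -e; apply: sum_one r1 _ _; first by apply: sumr_ge0 => i _; exact: powR_ge0.
  exact: (Hnorm _ Hzm).
have totV0 : \sum_(0 <= i < k) gV i = 1.
  have e := @sum_ext R k v (fun x => `|x| `^ r); cbv beta in e.
  rewrite /gV -e; apply: sum_one r1 _ _; first by apply: sumr_ge0 => i _; exact: powR_ge0.
  exact: (Hnorm _ Hzn).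
have totU : \sum_(s < d) \sum_(qq m s <= i < m s.+1) gU i = 1.
  have e2 : \sum_(m d <= i < k) gU i = 0.
    rewrite big_nat_cond big1 // => i /andP[/andP[hi _] _].
    by rewrite /gU /u (@Uzero R d k m monom F i Hsupp Hzm hi) normr0 powR0 // gt_eqF.
  rewrite -(@partition_p R d m monom) //.
  move: totU0; rewrite (big_cat_nat (m:=0) (n:= m d) (p:=k)) //=; last exact: ltnW.
  by rewrite e2 addr0.
have totV : \sum_(s < d) \sum_(qq n s <= i < n s.+1) gV i <= 1.
  rewrite -(@partition_p R d n monon) // -totV0; apply: sub_hi => //; exact: ltnW.
pose T (f : nat -> R) := \sum_(s < d) \sum_(qq n s <= i < m s.+1) f i.
have f1 : forall s, (s < d)%N -> (qq n s <= m s.+1)%N.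
  by case=> [//|s] hs /=; apply: ltnW; apply: Hnm; lia.
have f2 : forall s, (s < d)%N -> (qq m s <= qq n s)%N.
  by case=> [//|s] hs /=; apply: ltnW; apply: Hmn; lia.
have f3 : forall s, (s < d)%N -> (m s.+1 <= n s.+1)%N.
  by move=> s hs; apply: ltnW; apply: Hmn; lia.
have f4 : forall s, (s < d)%N -> (qq m s <= m s.+1)%N.
  by move=> s hs; apply: leq_trans (f2 _ hs) (f1 _ hs).
have g1 : forall s, (s < d)%N -> a * (qq n s)%:R <= (m s.+1)%:R.
  case=> [|s] hs /=; first by rewrite mulr0.
  by apply: pow_gap => //; [apply: Hn | apply: Hm | apply: Hnm]; lia.
have g2 : forall s, (s < d)%N -> a * (m s.+1)%:R <= (n s.+1)%:R.
  by move=> s hs; apply: pow_gap => //; [apply: Hm | apply: Hn | apply: Hmn]; lia.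
have am1 : 0 < a - 1 by rewrite subr_gt0.
have a0 : 0 < a by apply: lt_trans a1.
have C1 : (1 - a^-1) * \sum_(s < d) \sum_(qq m s <= i < m s.+1) gU i <= T gU.
  rewrite mulr_sumr; apply: ler_sum => -[s hs] _ /=.
  have hc : forall i, (qq m s <= i < m s.+1)%N -> gU i = gU (qq m s).
    by move=> i hi; rewrite /gU /u (@Ublock R d k m monom F s i Hstep Hzm hs mdk hi).
  rewrite (@const_sum R (qq m s) (qq m s) _ gU (gU (qq m s))) ?leqnn //.
  rewrite (@const_sum R (qq m s) (qq n s) _ gU (gU (qq m s))) ?f2 //.
  rewrite mulrA; apply: ler_wpM2r => //; rewrite !natrB ?f1 ?f4 //.
  have := g1 _ hs; set X := (m s.+1)%:R; set Y := (qq n s)%:R; set Z := (qq m s)%:R.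
  have Z0 : 0 <= Z by rewrite ler0n.
  have w0 : 0 < a^-1 by rewrite invr_gt0.
  have w1 : a^-1 <= 1 by rewrite invf_le1 // ltW.
  have aw : a * a^-1 = 1 by rewrite mulfV // gt_eqF.
  move=> hY.
  have hY' : Y <= a^-1 * X by rewrite ler_pdivlMl.
  nra.
have C2 : T gV <= (a - 1)^-1 * \sum_(s < d) \sum_(qq n s <= i < n s.+1) gV i.
  rewrite mulr_sumr; apply: ler_sum => -[s hs] _ /=.
  have hc : forall i, (qq n s <= i < n s.+1)%N -> gV i = gV (qq n s).
    by move=> i hi; rewrite /gV /v (@Ublock R d k n monon F s i Hstep Hzn hs Hk hi).
  have hc' : forall i, (qq n s <= i < m s.+1)%N -> gV i = gV (qq n s).
    by move=> i /andP[h1 h2]; apply: hc; rewrite h1 /=; apply: leq_trans h2 _; apply: f3.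
  rewrite (@const_sum R (qq n s) (qq n s) _ gV (gV (qq n s))) ?leqnn //.
  rewrite (@const_sum R (qq n s) (qq n s) _ gV (gV (qq n s))) ?leqnn //.
  rewrite mulrA; apply: ler_wpM2r => //.
  have hqn : (qq n s <= n s.+1)%N by apply: leq_trans (f1 _ hs) (f3 _ hs).
  rewrite !natrB ?f1 // ler_pdivlMl //.
  have := g2 _ hs; have := f1 _ hs; rewrite -(ler_nat R).
  set X := (m s.+1)%:R; set Y := (qq n s)%:R; set N := (n s.+1)%:R.
  have Y0 : 0 <= Y by rewrite ler0n.
  move=> hYX hXN; nra.
have C3 : T gD <= \sum_(0 <= i < k) gD i.
  apply: (@le_trans _ _ (\sum_(s < d) \sum_(qq n s <= i < n s.+1) gD i)).
    by apply: ler_sum => -[s hs] _ /=; apply: sub_hi => //; apply: f3.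
  rewrite -(@partition_p R d n monon) //; apply: sub_hi => //; exact: ltnW.
have C5 : T gU <= 1.
  rewrite -totU; apply: ler_sum => -[s hs] _ /=; apply: sub_lo => //; exact: f2.
pose lam := 1 - b^-1.
have b0 : 0 < b by apply: lt_trans hb3.
have x0 : 0 < b^-1 by rewrite invr_gt0.
have xb : b^-1 * b = 1 by rewrite mulVf // gt_eqF.
have x13 : b^-1 < 3^-1 by rewrite ltf_pV2 // ?posrE // ltr0n.
have lam01 : 0 < lam < 1.
  apply/andP; split; rewrite /lam; last by rewrite ltrBlDr ltrDl.
  by rewrite subr_gt0; apply: lt_trans x13 _; rewrite invf_lt1 ?ltr0n // ltr1n.
have C4 : T gU <= lam / lam `^ r * T gD + (1 - lam) / (1 - lam) `^ r * T gV.
  rewrite /T !mulr_sumr -big_split; apply: ler_sum => s _ /=.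
  rewrite !mulr_sumr -big_split; apply: ler_sum => i _ /=.
  rewrite /gU /gD /gV ext_sub.
exact: key_pt r1 lam01.
have SV0 : 0 <= T gV by apply: sumr_ge0 => s _; apply: sumr_ge0 => i _.
have DA0 : 0 <= T gD by apply: sumr_ge0 => s _; apply: sumr_ge0 => i _.
have hSV : T gV <= (a - 1)^-1.
  apply: le_trans C2 _; rewrite -[X in _ <= X]mulr1; apply: ler_wpM2l => //.
  by rewrite invr_ge0 ltW.
have hSU : 1 - a^-1 <= T gU by move: C1; rewrite totU mulr1.
have hc2 : (1 - lam) / (1 - lam) `^ r = b^-1 * b `^ r.
  have e : 1 - lam = b^-1 by rewrite /lam; ring.
  by rewrite e powR_invx // invrK.
rewrite hc2 in C4.
have B0 : 0 <= b `^ r by exact: powR_ge0.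
have hBa : b `^ r / (a - 1) <= 2.
  rewrite ler_pdivrMr //.
  have : b <= b `^ r := hB. lra.
have hSV2 : b^-1 * b `^ r * T gV <= 2 * b^-1.
  have h1 : b `^ r * T gV <= b `^ r / (a - 1) by rewrite ler_wpM2l.
  rewrite -mulrA [X in _ <= X]mulrC; apply: ler_wpM2l; first exact: ltW.
  exact: le_trans h1 hBa.
have hainv : a^-1 <= b^-1.
  have hba : b <= a := le_trans hB ha.
  by rewrite lef_pV2 ?posrE.
pose Q := T gU - b^-1 * b `^ r * T gV.
have hQ1 : 1 - 3 * b^-1 <= Q by rewrite /Q; lra.
have h3x : 3 * b^-1 < 1 by nra.
have hQle1 : Q <= 1.
  have : 0 <= b^-1 * b `^ r * T gV by rewrite !mulr_ge0 // ltW.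
  rewrite /Q; lra.
have hQ0 : 0 < Q by lra.
have hlam0 : 0 < lam by case/andP: lam01.
have hlam1 : lam < 1 by case/andP: lam01.
have hlamr : 0 < lam `^ r by exact: powR_gt0.
have hQDA : Q * lam `^ r <= lam * T gD.
  rewrite -ler_pdivlMr // mulrAC /Q; lra.
have hD : Q * lam `^ r <= \sum_(0 <= i < k) gD i.
  apply: le_trans hQDA _; apply: le_trans C3; nra.
have e := @sum_ext R k (fun j => u j - v j) (fun x => `|x| `^ r); cbv beta in e.
rewrite -/u -/v /lpnorm e -/gD.
have hpow : (Q * lam `^ r) `^ r^-1 = Q `^ r^-1 * lam.
  rewrite powRM; [|exact: ltW hQ0|exact: powR_ge0].
  rewrite -powRrM mulfV ?gt_eqF // powRr1 //; exact: ltW.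
have hQr : Q <= Q `^ r^-1.
  apply: ger1_powR; first by rewrite hQ0 hQle1.
  by rewrite invf_le1.
have hmono : (Q * lam `^ r) `^ r^-1 <= (\sum_(0 <= i < k) gD i) `^ r^-1.
  apply: ge0_ler_powR => //; first by rewrite invr_ge0 ltW.
    by rewrite nnegrE mulr_ge0 // ltW.
  by rewrite nnegrE; apply: sumr_ge0 => i _.
apply: (lt_le_trans _ hmono); rewrite hpow.
have heps : eps * b = 8 + 3 * eps.
  by rewrite /b mulrDr (mulrC eps (8 / eps)) divfK ?gt_eqF // mulrC.
have hex : eps = (8 + 3 * eps) * b^-1.
  by rewrite -heps -mulrA mulfV ?gt_eqF // mulr1.
have hlx : lam = 1 - b^-1 by [].
have : Q * lam <= Q `^ r^-1 * lam by rewrite ler_wpM2r // ltW.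
move: hex hlx hQ1 hQ0 x0 h3x; set x := b^-1; set y := Q `^ r^-1.
move=> hex hlx hQ1 hQ0 x0 h3x hh.
rewrite hlx in hh *.
nra.
Qed.
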